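(* Let $q=2^m$, let $d>3$ be an odd integer and $f(x)=x^d$. Let $S_1,S_2\subset\mathbb{P}^3(\overline{\mathbb{F}}_q)$ (coordinates $(x:y:z:t)$) be defined by $P_f(x,y,z)=0$ and $P_f(x,y,t)=0$, let $X=S_1\cap S_2$, and let $H_7$ be the plane $x+y+z+t=0$. Then $X\cap H_7$ equals the curve $C_7:=S_2\cap H_7$.
   Context: For $f(x)=x^d$, $P_f(x,y,z)=\frac{x^d+y^d+z^d+(x+y+z)^d}{(x+y)(x+z)(y+z)}$, a homogeneous polynomial (exact division in characteristic 2). *)

(* Defs.v *)
From mathcomp Require Import all_boot all_order all_algebra.
From mathcomp Require Import mpoly.
Set Implicit Arguments. Unset Strict Implicit. Unset Printing Implicit Defensive.
Import GRing.Theory.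
Local Open Scope ring_scope.

Definition vX (F : fieldType) : {mpoly F[3]} := 'X_(0 : 'I_3).
Definition vY (F : fieldType) : {mpoly F[3]} := 'X_(1 : 'I_3).
Definition vZ (F : fieldType) : {mpoly F[3]} := 'X_(2 : 'I_3).

Definition Pnum (F : fieldType) (d : nat) : {mpoly F[3]} :=
  vX F ^+ d + vY F ^+ d + vZ F ^+ d + (vX F + vY F + vZ F) ^+ d.

Definition Pden (F : fieldType) : {mpoly F[3]} :=
  (vX F + vY F) * (vX F + vZ F) * (vY F + vZ F).

(* Q is P_f: the exact quotient Pnum / Pden (unique, since {mpoly F[3]} is a
   domain and Pden <> 0). *)
Definition is_Pf (F : fieldType) (d : nat) (Q : {mpoly F[3]}) : Prop :=
  Pden F * Q = Pnum F d.

Definition ev3 (F : fieldType) (Q : {mpoly F[3]}) (a b c : F) : F :=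
  Q.@[fun i : 'I_3 => [:: a; b; c]`_i].

(* Main.v *)
Require Import Defs.
From mathcomp Require Import all_boot all_order all_algebra.
From mathcomp Require Import mpoly.
Import GRing.Theory.
Local Open Scope ring_scope.


Section S.
Variable F : closedFieldType.
Hypothesis hchar : 2%N \in [pchar F].

Lemma add2F (a : F) : a + a = 0.
Proof. by rewrite -mulr2n -mulr_natr (pcharf0 hchar) mulr0. Qed.

Lemma add2M (a : {mpoly F[3]}) : a + a = 0.
Proof.
by rewrite -mulr2n -mulr_natr -(rmorph_nat (@mpolyC 3 F)) (pcharf0 hchar) rmorph0 mulr0.
Qed.

Definition lq : 3.-tuple {mpoly F[3]} := [tuple vX F; vY F; vX F + vY F + vZ F].

Lemma cX : vX F \mPo lq = vX F. Proof. by rewrite /vX comp_mpolyXU. Qed.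
Lemma cY : vY F \mPo lq = vY F. Proof. by rewrite /vY comp_mpolyXU. Qed.
Lemma cZ : vZ F \mPo lq = vX F + vY F + vZ F. Proof. by rewrite /vZ comp_mpolyXU. Qed.

Lemma sumc : vX F + vY F + (vX F + vY F + vZ F) = vZ F.
Proof.
have e : vX F + vY F + (vX F + vY F + vZ F) = (vX F + vY F + (vX F + vY F)) + vZ F by rewrite !addrA.
by rewrite e add2M add0r.
Qed.

Lemma cnum d : Pnum F d \mPo lq = Pnum F d.
Proof.
rewrite /Pnum !(rmorphD, rmorphXn) /= /vX /vY /vZ !comp_mpolyXU /=.
rewrite -/(vX F) -/(vY F) -/(vZ F) sumc.
by rewrite -!addrA; congr (_ + (_ + _)); rewrite addrC.
Qed.

Lemma cden : Pden F \mPo lq = Pden F.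
Proof.
rewrite /Pden !(rmorphD, rmorphM) /= /vX /vY /vZ !comp_mpolyXU /= -/(vX F) -/(vY F) -/(vZ F).
have e1 : vX F + (vX F + vY F + vZ F) = vY F + vZ F.
  by rewrite !addrA (add2M (vX F)) add0r.
have e2 : vY F + (vX F + vY F + vZ F) = vX F + vZ F.
  by rewrite [vX F + vY F]addrC !addrA (add2M (vY F)) add0r.
by rewrite e1 e2 -!mulrA; congr (_ * _); rewrite mulrC.
Qed.

Lemma den_neq0 : Pden F != 0.
Proof.
have ev : forall a b c : {mpoly F[3]}, a != 0 -> b != 0 -> c != 0 -> a * b * c != 0.
  by move=> a b c ha hb hc; rewrite !mulf_neq0.
apply: ev; apply/negP => /eqP h.
- have := congr1 (meval (fun i : 'I_3 => [:: 1; 0; 0]`_i)) h.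
  by rewrite mevalD /vX /vY !mevalXU /= addr0 meval0; apply/eqP; exact: oner_neq0.
- have := congr1 (meval (fun i : 'I_3 => [:: 1; 0; 0]`_i)) h.
  by rewrite mevalD /vX /vZ !mevalXU /= addr0 meval0; apply/eqP; exact: oner_neq0.
- have := congr1 (meval (fun i : 'I_3 => [:: 0; 1; 0]`_i)) h.
  by rewrite mevalD /vY /vZ !mevalXU /= addr0 meval0; apply/eqP; exact: oner_neq0.
Qed.

Lemma Qinv d (Q : {mpoly F[3]}) : is_Pf d Q -> Q \mPo lq = Q.
Proof.
rewrite /is_Pf => hQ.
apply: (mulfI den_neq0).
transitivity ((Pden F * Q) \mPo lq); last by rewrite hQ cnum.
by rewrite comp_mpoly_is_multiplicative /= cden.
Qed.

Lemma evinv d (Q : {mpoly F[3]}) (x y z : F) : is_Pf d Q -> ev3 Q x y (x + y + z) = ev3 Q x y z.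
Proof.
move=> hQ; rewrite /ev3 -{2}(@Qinv d Q hQ) comp_mpoly_meval.
apply: meval_eq => i.
case: i => [[|[|[|i]]] hi] //=; rewrite (tnth_nth 0) /=.
- by rewrite /vX mevalXU.
- by rewrite /vY mevalXU.
- by rewrite /vX /vY /vZ !mevalD !mevalXU.
Qed.
End S.

Theorem proposition3p2 (F : closedFieldType) (m d : nat)
  (hchar : 2%N \in [pchar F]) (hm : (0 < m)%N)
  (hodd : odd d) (hd : (3 < d)%N)
  (Q : {mpoly F[3]}) (hQ : is_Pf d Q) :
  forall x y z t : F, [|| x != 0, y != 0, z != 0 | t != 0] ->
    ((ev3 Q x y z = 0 /\ ev3 Q x y t = 0) /\ x + y + z + t = 0)
    <-> (ev3 Q x y t = 0 /\ x + y + z + t = 0).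
Proof.
move=> x y z t _; split; first by case=> [[_ ->] ->].
case=> h0 hs; split=> //; split=> //.
have ht : t = x + y + z.
  by rewrite -[t]add0r -hs -addrA (@add2F F hchar t) addr0.
by rewrite -(@evinv F hchar d Q x y z hQ) -ht.
Qed.
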